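(* Let $G$ be a finitely generated pro-$p$ group, $g\in G$ and $k\in \mathbb{N}$. Let $N$ be the closed normal subgroup of $G$ generated by $g^{p^k}$ and $\overline G=G/N$. Then $\operatorname{rg}(\overline G)\ge \operatorname{rg}(G)-\frac{1}{p^k}$.
   Context: For a finitely generated pro-$p$ group $G$, the rank gradient is $\operatorname{rg}(G)=\lim_{i\to\infty}\frac{d(U_i)}{|G:U_i|}=\inf_{U\lhd_o G}\frac{d(U)}{|G:U|}$, where $G>U_1>U_2>\ldots$ is any chain of open normal subgroups with trivial intersection and $d(\cdot)$ is the minimal number of generators (equal to $\dim_{\mathbb{F}_p}{\rm H}_1(\cdot;\mathbb{F}_p)$); it is independent of the chain. *)

(* Defs.v *)
(* Abstract (possibly infinite) topological groups
   are set up by hand: a group law on the carrier of a topologicalType. *)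
From HB Require Import structures.
From mathcomp Require Import all_boot all_order all_algebra.
From mathcomp Require Import all_classical all_reals all_analysis.
From mathcomp Require Import Rstruct Rstruct_topology.
Set Implicit Arguments. Unset Strict Implicit. Unset Printing Implicit Defensive.
Import Order.TTheory GRing.Theory Num.Theory.
Local Open Scope classical_set_scope.
Local Open Scope ring_scope.

Record group_law (T : Type) := GroupLaw {
  gmul : T -> T -> T;
  ginv : T -> T;
  gone : T;
  gmulA : forall x y z, gmul x (gmul y z) = gmul (gmul x y) z;
  gmul1 : forall x, gmul x gone = x;
  g1mul : forall x, gmul gone x = x;
  gmulV : forall x, gmul x (ginv x) = gone;
  gVmul : forall x, gmul (ginv x) x = gone }.

Section GroupDefs.
Context {T : topologicalType} (L : group_law T).
Local Notation "x * y" := (gmul L x y).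
Local Notation "x ^-1" := (ginv L x).
Local Notation "1" := (gone L).

Fixpoint gpow (x : T) (n : nat) : T :=
  match n with O => 1 | S m => x * gpow x m end.

Definition is_subgroup (H : set T) : Prop :=
  H 1 /\ (forall x y, H x -> H y -> H (x * y)) /\ (forall x, H x -> H (x^-1)).

Definition is_normal_subgroup (H : set T) : Prop :=
  is_subgroup H /\ (forall x h, H h -> H (x^-1 * h * x)).

Definition gen_subgroup (A : set T) : set T :=
  \bigcap_(H in [set H | is_subgroup H /\ A `<=` H]) H.

Definition closed_normal_closure (A : set T) : set T :=
  \bigcap_(H in [set H | is_normal_subgroup H /\ closed H /\ A `<=` H]) H.

Definition top_generated_by (U : set T) (s : seq T) : Prop :=
  {subset s <= U} /\ closure (gen_subgroup [set x | x \in s]) = U.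

Definition top_finitely_generated : Prop :=
  exists s : seq T, top_generated_by setT s.

(* H has index n in G: there is a list of n left coset representatives *)
Definition has_index (H : set T) (n : nat) : Prop :=
  exists s : seq T, size s = n /\
    (forall i j, (i < n)%N -> (j < n)%N ->
        H ((nth 1 s i)^-1 * nth 1 s j) -> i = j) /\
    (forall x, exists2 i, (i < n)%N & H ((nth 1 s i)^-1 * x)).

Definition is_topological_group : Prop :=
  continuous (fun xy : T * T => xy.1 * xy.2) /\ continuous (ginv L).

Definition pro_p_group (p : nat) : Prop :=
  [/\ is_topological_group, compact (@setT T), hausdorff_space T,
      totally_disconnected (@setT T) &
      forall U : set T, open U -> is_normal_subgroup U ->
        exists e : nat, has_index U (p ^ e)%N].

Definition dgen (U : set T) : Rdefinitions.R :=
  inf [set (n%:R : Rdefinitions.R) | n in [set n : nat | exists s : seq T,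
        size s = n /\ top_generated_by U s]].

Definition index (U : set T) : Rdefinitions.R :=
  inf [set (n%:R : Rdefinitions.R) | n in [set n : nat | has_index U n]].

Definition rank_gradient : Rdefinitions.R :=
  inf [set dgen U / index U | U in [set U : set T | open U /\ is_normal_subgroup U]].

End GroupDefs.

Definition is_group_hom {T1 T2 : Type} (L1 : group_law T1) (L2 : group_law T2)
  (f : T1 -> T2) : Prop :=
  forall x y, f (gmul L1 x y) = gmul L2 (f x) (f y).

(* Main.v *)
Set Warnings "-notation-overridden -ambiguous-paths -notation-incompatible-prefix -deprecated".
From Pilot Require Import Defs.
From mathcomp Require Import all_fingroup all_solvable.
From mathcomp Require Import all_boot all_order all_algebra.
From mathcomp Require Import all_classical all_reals all_analysis.
From mathcomp Require Import Rstruct Rstruct_topology.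
Set Implicit Arguments. Unset Strict Implicit. Unset Printing Implicit Defensive.
Import Order.TTheory GRing.Theory Num.Theory.
Local Open Scope classical_set_scope.
Local Open Scope ring_scope.

Section GroupAlg.
Context {T : topologicalType} (L : group_law T).
Local Notation m := (gmul L).
Local Notation iv := (ginv L).
Local Notation e := (gone L).

Lemma mulKg x y : m (iv x) (m x y) = y.
Proof. by rewrite gmulA gVmul g1mul. Qed.
Lemma mulKVg x y : m x (m (iv x) y) = y.
Proof. by rewrite gmulA gmulV g1mul. Qed.
Lemma mulgK x y : m (m y x) (iv x) = y.
Proof. by rewrite -gmulA gmulV gmul1. Qed.
Lemma mulgKV x y : m (m y (iv x)) x = y.
Proof. by rewrite -gmulA gVmul gmul1. Qed.
Lemma mulg_injl x y z : m x y = m x z -> y = z.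
Proof. by move=> h; rewrite -(mulKg x y) h mulKg. Qed.
Lemma mulg_injr x y z : m y x = m z x -> y = z.
Proof. by move=> h; rewrite -(mulgK x y) h mulgK. Qed.
Lemma invg_uniq x y : m x y = e -> y = iv x.
Proof. by move=> h; apply: (@mulg_injl x); rewrite h gmulV. Qed.
Lemma invgK x : iv (iv x) = x.
Proof. by symmetry; apply: invg_uniq; rewrite gVmul. Qed.
Lemma invgM x y : iv (m x y) = m (iv y) (iv x).
Proof.
by symmetry; apply: invg_uniq; rewrite gmulA mulgK gmulV.
Qed.
Lemma invg1 : iv e = e.
Proof. by symmetry; apply: invg_uniq; rewrite gmul1. Qed.
Lemma invg_eq1 x : iv x = e -> x = e.
Proof. by move=> h; rewrite -(invgK x) h invg1. Qed.
Lemma mul_eq1 x y : m (iv x) y = e -> x = y.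
Proof. by move=> h; rewrite -(mulKVg x y) h gmul1. Qed.

Lemma subg1 H : is_subgroup L H -> H e.
Proof. by case. Qed.
Lemma subgM H x y : is_subgroup L H -> H x -> H y -> H (m x y).
Proof. by case=> _ [+ _]; apply. Qed.
Lemma subgV H x : is_subgroup L H -> H x -> H (iv x).
Proof. by case=> _ [_]; apply. Qed.
Lemma subgVl H x : is_subgroup L H -> H (iv x) -> H x.
Proof. by move=> sH /(subgV sH); rewrite invgK. Qed.
Lemma subgMl H x y : is_subgroup L H -> H x -> H (m x y) -> H y.
Proof. by move=> sH hx hxy; rewrite -(mulKg x y); apply: subgM => //; apply: subgV. Qed.
Lemma subgMr H x y : is_subgroup L H -> H y -> H (m x y) -> H x.
Proof. by move=> sH hy hxy; rewrite -(mulgK y x); apply: subgM => //; apply: subgV. Qed.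

Lemma gpowS x n : gpow L x n.+1 = m x (gpow L x n).
Proof. by []. Qed.
Lemma gpow0 x : gpow L x 0 = e.
Proof. by []. Qed.
Lemma gpow1 x : gpow L x 1 = x.
Proof. by rewrite /= gmul1. Qed.
Lemma gpowD x a b : gpow L x (a + b) = m (gpow L x a) (gpow L x b).
Proof. by elim: a => [|a IH]; rewrite ?add0n ?g1mul // addSn /= IH gmulA. Qed.
Lemma gpowSr x n : gpow L x n.+1 = m (gpow L x n) x.
Proof. by rewrite -addn1 gpowD gpow1. Qed.
Lemma gpowM x a b : gpow L x (a * b) = gpow L (gpow L x a) b.
Proof. by elim: b => [|b IH]; rewrite ?muln0 // mulnS gpowD IH. Qed.
Lemma gpow_comm x a b : m (gpow L x a) (gpow L x b) = m (gpow L x b) (gpow L x a).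
Proof. by rewrite -!gpowD addnC. Qed.
Lemma gpow_sub H x n : is_subgroup L H -> H x -> H (gpow L x n).
Proof. by move=> sH hx; elim: n => [|n IH] /=; [apply: subg1|apply: subgM]. Qed.
Lemma conjM z a b : m (iv z) (m (m a b) z) = m (m (iv z) (m a z)) (m (iv z) (m b z)).
Proof. by rewrite !gmulA mulgK. Qed.
Lemma gpow_conj z x n :
  m (iv z) (m (gpow L x n) z) = gpow L (m (iv z) (m x z)) n.
Proof.
elim: n => [|n IH] /=; first by rewrite g1mul gVmul.
by rewrite conjM IH.
Qed.

Lemma normal_conj H x h : is_normal_subgroup L H -> H h -> H (m (iv x) (m h x)).
Proof. by case=> _ /(_ x h) hn /hn; rewrite gmulA. Qed.
Lemma normal_conjV H x h : is_normal_subgroup L H -> H h -> H (m x (m h (iv x))).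
Proof. by move=> nH /(normal_conj (iv x) nH); rewrite invgK. Qed.

Lemma gen_sub A : is_subgroup L (gen_subgroup L A).
Proof.
split; first by move=> H [sH _]; apply: subg1.
split; first by move=> x y hx hy H hH; apply: subgM (hH.1) (hx H hH) (hy H hH).
by move=> x hx H hH; apply: subgV (hH.1) (hx H hH).
Qed.
Lemma gen_incl A : A `<=` gen_subgroup L A.
Proof. by move=> x Ax H [_ /(_ x Ax)]. Qed.
Lemma gen_min A H : is_subgroup L H -> A `<=` H -> gen_subgroup L A `<=` H.
Proof. by move=> sH AH x; apply. Qed.

End GroupAlg.

Section Hom.
Context {T1 T2 : topologicalType} (L1 : group_law T1) (L2 : group_law T2).
Variable f : T1 -> T2.
Hypothesis hf : is_group_hom L1 L2 f.

Lemma hom1 : f (gone L1) = gone L2.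
Proof.
apply: (@mulg_injl _ L2 (f (gone L1))).
by rewrite -hf !gmul1.
Qed.
Lemma homV x : f (ginv L1 x) = ginv L2 (f x).
Proof. by apply: invg_uniq; rewrite -hf gmulV hom1. Qed.
Lemma hom_pow x n : f (gpow L1 x n) = gpow L2 (f x) n.
Proof. by elim: n => [|n IH] /=; rewrite ?hom1 // hf IH. Qed.

Lemma preim_subgroup H : is_subgroup L2 H -> is_subgroup L1 (f @^-1` H).
Proof.
move=> sH; split; first by rewrite /= hom1; apply: subg1.
split; first by move=> x y; rewrite /= hf; apply: subgM.
by move=> x; rewrite /= homV; apply: subgV.
Qed.
Lemma preim_normal H : is_normal_subgroup L2 H -> is_normal_subgroup L1 (f @^-1` H).
Proof.
move=> [sH nH]; split; first exact: preim_subgroup.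
by move=> x h /=; rewrite !hf homV; apply: nH.
Qed.
Lemma image_subgroup H : is_subgroup L1 H -> is_subgroup L2 (f @` H).
Proof.
move=> sH; split; first by exists (gone L1); [apply: subg1|apply: hom1].
split; first by move=> _ _ [x hx <-] [y hy <-]; exists (gmul L1 x y); [apply: subgM|apply: hf].
by move=> _ [x hx <-]; exists (ginv L1 x); [apply: subgV|apply: homV].
Qed.
Lemma image_gen A : gen_subgroup L2 (f @` A) `<=` f @` gen_subgroup L1 A.
Proof.
apply: gen_min; first by apply: image_subgroup; apply: gen_sub.
by move=> _ [x hx <-]; exists x => //; apply: gen_incl.
Qed.
Lemma gen_image A : f @` gen_subgroup L1 A `<=` gen_subgroup L2 (f @` A).
Proof.
move=> _ [x hx <-].
have : (f @^-1` gen_subgroup L2 (f @` A)) x.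
  apply: (gen_min (preim_subgroup (gen_sub _ _))) hx.
  by move=> y Ay; apply: gen_incl; exists y.
by [].
Qed.
End Hom.

Section Proj.
Context {A B : topologicalType}.
Lemma cfst (a : A * B) : (fun p : A * B => p.1) @ nbhs a --> a.1.
Proof. exact: (@cvg_fst _ _ (nbhs a.1) (nbhs a.2) _). Qed.
Lemma csnd (a : A * B) : (fun p : A * B => p.2) @ nbhs a --> a.2.
Proof. exact: (@cvg_snd _ _ (nbhs a.1) (nbhs a.2) _). Qed.
End Proj.

Section TopGroup.
Context {T : topologicalType} (L : group_law T).
Local Notation m := (gmul L).
Local Notation iv := (ginv L).
Local Notation e := (gone L).
Hypothesis tg : is_topological_group L.

Lemma cvgMg {X : Type} (F : set_system X) {FF : Filter F} (f g : X -> T) a b :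
  f @ F --> a -> g @ F --> b -> (fun z => m (f z) (g z)) @ F --> m a b.
Proof.
move=> fa gb.
have H := tg.1 (a, b).
apply: (cvg_comp (fun z => (f z, g z)) (fun xy : T * T => m xy.1 xy.2) _ H).
exact: cvg_pair.
Qed.

Lemma cvgVg {X : Type} (F : set_system X) {FF : Filter F} (f : X -> T) a :
  f @ F --> a -> (fun z => iv (f z)) @ F --> iv a.
Proof. by move=> fa; apply: (cvg_comp f (ginv L) _ (tg.2 a)). Qed.

Lemma cvg_id' (x : T) : (fun y : T => y) @ x --> x.
Proof. exact: cvg_id. Qed.
Lemma cvg_cst' {X : Type} (F : set_system X) {FF : Filter F} (c : T) : (fun _ : X => c) @ F --> c.
Proof. exact: cvg_cst. Qed.

Lemma subgroup_open H : is_subgroup L H -> nbhs e H -> open H.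
Proof.
move=> sH nH; rewrite openE => h Hh.
have c : (fun y => m (iv h) y) @ h --> e.
  by rewrite -(gVmul L h); apply: cvgMg; [apply: cvg_cst'|apply: cvg_id'].
have := c _ nH; rewrite /= nbhs_simpl => /=.
move=> nh; rewrite /interior; apply: filterS nh => y /= Hy.
by rewrite -(mulKVg L h y); apply: subgM.
Qed.

Lemma open_subgroup_closed H : is_subgroup L H -> open H -> closed H.
Proof.
move=> sH oH; rewrite -[H]setCK; apply: open_closedC.
rewrite openE => y nHy.
have c : (fun z => m (iv y) z) @ y --> e.
  by rewrite -(gVmul L y); apply: cvgMg; [apply: cvg_cst'|apply: cvg_id'].
have nH : nbhs e H by apply: open_nbhs_nbhs; split => //; apply: subg1.
have := c _ nH; rewrite /= nbhs_simpl => nh; rewrite /interior.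
have nh' : nbhs y [set z | H (m (iv y) z)] := nh.
move: nh'; apply: filterS => z /= Hz Hz'; apply: nHy.
apply: (subgVl sH); rewrite -(mulgK L z (iv y)).
by apply: subgM sH Hz (subgV sH Hz').
Qed.

Lemma cont_conj (z : T) : continuous (fun y => m (iv z) (m y z)).
Proof.
move=> y; apply: cvgMg; first exact: cvg_cst.
by apply: cvgMg; [exact: cvg_id|exact: cvg_cst].
Qed.

End TopGroup.

Section ZeroDim.
Context {T : topologicalType}.
Hypothesis cT : compact [set: T].
Hypothesis hT : hausdorff_space T.
Hypothesis tdT : totally_disconnected [set: T].

Lemma clopen_sep_sub (x : T) (O : set T) : open O ->
  (forall y, ~ O y -> exists C, [/\ clopen C, C x & ~ C y]) ->
  exists D, [/\ clopen D, D x & D `<=` O].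
Proof.
move=> oO sep.
pose F := filter_from [set D : set T | D x /\ clopen D] id.
have FF : Filter F.
  apply: filter_from_filter; first by exists setT; split => //; exact: clopenT.
  by move=> A B [? ?] [? ?]; exists (A `&` B) => //; split=> //; exact: clopenI.
have PF : ProperFilter F by apply: filter_from_proper; move=> ? [? _]; exists x.
suff : F O by case=> D [Dx cD] DO; exists D.
have /(iffLR (compact_near_coveringP _)) : compact (~` O).
  by apply: (subclosed_compact _ cT) => //; exact: open_closedC.
move=> /(_ _ _ setC (powerset_filter_from_filter PF))[].
  move=> y nOy; have [C [[oC cC] Cx Cy]] := sep y nOy.
  exists (~` C, [set U | U `<=` C]); first split.
  - by apply: open_nbhs_nbhs; split => //; exact: closed_openC.
  - apply/near_powerset_filter_fromP; first by move=> ? ?; exact: subset_trans.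
    by exists C => //; exists C.
  - by case=> i j [? /subsetC]; apply.
by move=> D [DF _ [C DC]]/(_ _ DC)/subsetC2/filterS; apply; exact: DF.
Qed.

Lemma clopen_base (x : T) (W : set T) : open W -> W x ->
  exists D, [/\ clopen D, D x & D `<=` W].
Proof.
move=> oW Wx.
pose Q := \bigcap_(D in [set D : set T | clopen D /\ D x]) D.
have K : forall O, open O -> Q `<=` O -> exists D, [/\ clopen D, D x & D `<=` O].
  move=> O oO QO; apply: clopen_sep_sub => // y nOy.
  have nQy : ~ Q y by move/QO.
  apply: contrapT => hn; apply: nQy => D [cD Dx]; apply: contrapT => nDy.
  by apply: hn; exists D.
have Qx : Q x by move=> D [].
have clQ : closed Q by apply: closed_bigI => D [[]].
have closQ : closure Q `<=` Q by move=> z; rewrite -((closure_id Q).1 clQ).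
have cQ : connected Q.
  apply: contrapT => /connectedPn [E [E0 QE [sep1 sep2]]].
  have [b0 Eb0x] : exists b, E b x.
    by move: Qx; rewrite QE => -[h|h]; [exists false|exists true].
  have QAB : Q = E b0 `|` E (~~ b0).
    by case: b0 {Eb0x} => /=; rewrite QE // setUC.
  have sepAB : closure (E b0) `&` E (~~ b0) = set0 /\ E b0 `&` closure (E (~~ b0)) = set0.
    case: b0 {Eb0x QAB} => /=; split => //; rewrite setIC //.
  set A := E b0 in Eb0x QAB sepAB *; set B := E (~~ b0) in QAB sepAB *.
  have clA : closed A.
    rewrite (closure_id A); apply/seteqP; split; first exact: subset_closure.
    move=> z clAz.
    have : Q z by apply: closQ; apply: closureS clAz => w Aw; rewrite QAB; left.
    rewrite QAB => -[//|Bz]; exfalso.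
    by have : (closure A `&` B) z by []; rewrite sepAB.1.
  have AB0 : A `&` B = set0.
    apply/seteqP; split => // z [Az Bz].
    have : (closure A `&` B) z by split => //; apply: subset_closure.
    by rewrite sepAB.1.
  have : set_nbhs A (~` B).
    apply/set_nbhsP; exists (~` B); split => //.
    - apply: closed_openC; rewrite (closure_id B); apply/seteqP; split; first exact: subset_closure.
      move=> z clBz.
      have : Q z by apply: closQ; apply: closureS clBz => w Bw; rewrite QAB; right.
      rewrite QAB => -[Az|//]; exfalso.
      by have : (A `&` closure B) z by []; rewrite sepAB.2.
    - by move=> z Az Bz; have : (A `&` B) z by []; rewrite AB0.
  move=> /(compact_normal hT cT clA) [C0 /set_nbhsP [U0 [oU0 AU0 U0C0]] clC0].
  have clU0 : closure U0 `<=` ~` B by apply: subset_trans clC0; apply: closureS.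
  have oO : open (U0 `|` ~` closure U0).
    by apply: openU => //; apply: closed_openC; apply: closed_closure.
  have [D [[oD cD] Dx DO]] : exists D, [/\ clopen D, D x & D `<=` U0 `|` ~` closure U0].
    apply: K => // z; rewrite QAB => -[Az|Bz]; first by left; apply: AU0.
    by right => /clU0.
  have DU : Q `<=` D `&` U0.
    move=> z Qz; apply: Qz; split; last by split => //; apply: AU0.
    split; first by apply: openI.
    have -> : D `&` U0 = D `&` closure U0.
      apply/seteqP; split => w [Dw Uw]; split => //; first by apply: subset_closure.
      by case: (DO w Dw) => // /(_ Uw).
    by apply: closedI => //; apply: closed_closure.
  have [b Bb] := E0 (~~ b0).
  have Qb : Q b by rewrite QAB; right.
  have [_ Ub] := DU b Qb.
  by apply: (clU0 b); [apply: subset_closure|].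
have QW : Q `<=` W.
  move=> z Qz.
  have : connected_component [set: T] x z.
    by apply: (connected_component_max Qx) => //.
  by rewrite tdT // => ->.
exact: K.
Qed.

End ZeroDim.

Section Profinite.
Context {T : topologicalType} (L : group_law T).
Local Notation m := (gmul L).
Local Notation iv := (ginv L).
Local Notation e := (gone L).
Hypothesis tg : is_topological_group L.
Hypothesis cT : compact [set: T].
Hypothesis hT : hausdorff_space T.
Hypothesis tdT : totally_disconnected [set: T].

Lemma normal_base (W : set T) : open W -> W e ->
  exists V, [/\ open V, is_normal_subgroup L V & V `<=` W].
Proof.
move=> oW We.
have [D [[oD cD] De DW]] := clopen_base cT hT tdT oW We.
pose f (z : T * T) (y : T) := m z.2 (m (iv z.1) (m y z.1)).
pose S := [set y | forall z : T * T, (@setT T `*` D) z -> D (f z y)].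
have cK : compact (@setT T `*` D).
  exact: (compact_setX cT (subclosed_compact cD cT (@subsetT _ D))).
have nS : nbhs e S.
  have /(iffLR (compact_near_coveringP _)) := cK.
  move=> /(_ T (nbhs e) (fun y z => D (f z y)) _) => H.
  rewrite /S; apply: H => z Kz.
  have cf : (fun zy : (T * T) * T => f zy.1 zy.2) @ nbhs (z, e) --> f z e.
    have c11 : (fun zy : (T * T) * T => zy.1.1) @ nbhs (z, e) --> z.1.
      exact: (cvg_comp _ _ (@cfst _ _ (z, e)) (@cfst _ _ z)).
    have c12 : (fun zy : (T * T) * T => zy.1.2) @ nbhs (z, e) --> z.2.
      exact: (cvg_comp _ _ (@cfst _ _ (z, e)) (@csnd _ _ z)).
    have c2 : (fun zy : (T * T) * T => zy.2) @ nbhs (z, e) --> e.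
      exact: (@csnd _ _ (z, e)).
    rewrite /f; apply: cvgMg => //; apply: cvgMg => //; first exact: cvgVg.
    exact: cvgMg.
  have fze : f z e = z.2 by rewrite /f g1mul gVmul gmul1.
  rewrite fze in cf; apply: cf; apply: open_nbhs_nbhs; split => //.
  by case: Kz.
have S1 : forall y, S y -> D y.
  by move=> y /(_ (e, e)); rewrite /f /= g1mul invg1 gmul1 g1mul; apply; split.
have SM : forall y1 y2, S y1 -> S y2 -> S (m y1 y2).
  move=> y1 y2 h1 h2 [x c] [_ Dc]; rewrite /f /=.
  rewrite conjM gmulA.
  have := h1 (x, c) (conj (I : setT x) Dc); rewrite /f /= => D1.
  by have := h2 (x, _) (conj (I : setT x) D1).
have SJ : forall y z, S y -> S (m (iv z) (m y z)).
  move=> a b h [x c] [_ Dc]; rewrite /f /=.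
  have -> : m (iv x) (m (m (iv b) (m a b)) x) = m (iv (m b x)) (m a (m b x)).
    by rewrite invgM -!gmulA.
  exact: (h (m b x, c) (conj (I : setT _) Dc)).
pose V := [set y | S y /\ S (iv y)].
have sV : is_subgroup L V.
  split.
    have S1e : S e by move=> [x c] [_ Dc]; rewrite /f /= g1mul gVmul gmul1.
    by split => //; rewrite invg1.
  split; first by move=> a b [? ?] [? ?]; split; [apply: SM|rewrite invgM; apply: SM].
  by move=> a [? ?]; split; rewrite ?invgK.
have nV : is_normal_subgroup L V.
  split => // a b [h1 h2]; split; first by rewrite -gmulA; apply: SJ.
  by rewrite !invgM invgK; apply: SJ.
exists V; split => //; last by move=> y [/S1 /DW].
apply: (subgroup_open tg sV).
have nS' : nbhs e [set y | S (iv y)].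
  have c := cvgVg tg (@cvg_id' _ e); rewrite invg1 in c.
  exact: c _ nS.
by apply: filterI.
Qed.

Lemma closure_char (H : set T) (x : T) : is_subgroup L H ->
  (forall V, open V -> is_normal_subgroup L V -> exists2 h, H h & V (m (iv h) x)) ->
  closure H x.
Proof.
move=> sH hV B nB.
have c : (fun y => m x y) @ e --> x.
  rewrite -[X in _ --> X](gmul1 L x); apply: (cvgMg tg); [exact: cvg_cst|exact: cvg_id].
have nB' : nbhs e [set y | B (m x y)] := c _ nB.
have [W [oW We] WB] : exists2 W, open_nbhs e W & W `<=` [set y | B (m x y)].
  by move: nB'; rewrite nbhsE.
have [V [oV nV VW]] := normal_base oW We.
have [h Hh Vh] := hV V oV nV.
exists h; split => //.
have Vh' : V (m (iv x) h) by have := subgV nV.1 Vh; rewrite invgM invgK.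
by have := WB _ (VW _ Vh'); rewrite /= mulKVg.
Qed.
End Profinite.

Section FinQuot.
Context {T : topologicalType} (L : group_law T).
Local Notation m := (gmul L).
Local Notation iv := (ginv L).
Local Notation e := (gone L).
Variable V : set T.
Hypothesis nV : is_normal_subgroup L V.
Variable n : nat.
Variable s : seq T.
Hypothesis hd : forall i j, (i < n)%N -> (j < n)%N ->
        V (m (iv (nth e s i)) (nth e s j)) -> i = j.
Hypothesis hc : forall x, exists2 i, (i < n)%N & V (m (iv (nth e s i)) x).

Local Notation r i := (nth e s (nat_of_ord i)).

Lemma ex_idx x : exists i : 'I_n, V (m (iv (r i)) x).
Proof. by have [i ltin Vi] := hc x; exists (Ordinal ltin). Qed.

Definition idx x : 'I_n := proj1_sig (cid (ex_idx x)).
Lemma idxP x : V (m (iv (r (idx x))) x).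
Proof. exact: (proj2_sig (cid (ex_idx x))). Qed.

Lemma Vquot a b c : V (m (iv a) b) -> V (m (iv c) b) -> V (m (iv a) c).
Proof.
move=> h1 h2; have := subgM nV.1 h1 (subgV nV.1 h2).
by rewrite invgM invgK gmulA mulgK.
Qed.

Lemma Vquot' a b c : V (m (iv a) b) -> V (m (iv a) c) -> V (m (iv b) c).
Proof.
move=> h1 h2; have := subgM nV.1 (subgV nV.1 h1) h2.
by rewrite invgM invgK -gmulA mulKVg.
Qed.

Lemma idx_uniq x (i : 'I_n) : V (m (iv (r i)) x) -> idx x = i.
Proof.
move=> h; apply/val_inj/hd; [exact: ltn_ord|exact: ltn_ord|].
exact: Vquot (idxP x) h.
Qed.

Definition act x (i : 'I_n) : 'I_n := idx (m (iv x) (r i)).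
Lemma act_inj x : injective (act x).
Proof.
move=> i j hij; apply/val_inj/hd; [exact: ltn_ord|exact: ltn_ord|].
have h1 := idxP (m (iv x) (r i)); have h2 := idxP (m (iv x) (r j)).
rewrite /act in hij; rewrite hij in h1.
by have := Vquot' h1 h2; rewrite invgM invgK -!gmulA mulKVg.
Qed.

Definition psi x : {perm 'I_n} := perm (@act_inj x).

Lemma psiE x i : psi x i = idx (m (iv x) (r i)).
Proof. by rewrite permE. Qed.

Lemma psiM x y : psi (m x y) = (psi x * psi y)%g.
Proof.
apply/mathcomp.fingroup.perm.permP => i; rewrite permM !psiE.
apply: idx_uniq.
have h1 := idxP (m (iv y) (r (idx (m (iv x) (r i))))).
have h2 := idxP (m (iv x) (r i)).
have := subgM nV.1 h1 h2.
by rewrite invgM -!gmulA mulKVg.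
Qed.

Lemma psi_ker x : psi x = 1%g <-> V x.
Proof.
split=> [h|Vx].
  have h0 := idxP e; rewrite gmul1 in h0.
  have := congr1 (fun q : {perm 'I_n} => q (idx e)) h.
  rewrite psiE perm1 => /(congr1 (fun i : 'I_n => r i)) => hr.
  have := idxP (m (iv x) (r (idx e))); rewrite hr => h1.
  have := normal_conjV (r (idx e)) nV h1.
  rewrite !gmulA mulgK gmulV g1mul => Vix.
  exact: subgVl nV.1 Vix.
apply/mathcomp.fingroup.perm.permP => i; rewrite psiE perm1; apply: idx_uniq.
by apply: (normal_conj (r i) nV); apply: subgV nV.1 _.
Qed.

Lemma psi1 : psi e = 1%g.
Proof. by apply/psi_ker; apply: (subg1 nV.1). Qed.

Lemma psiV x : psi (iv x) = (psi x)^-1%g.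
Proof.
apply: (@mulgI _ (psi x)); rewrite -psiM gmulV psi1.
by rewrite mulgV.
Qed.

Lemma psi_eq x y : psi x = psi y <-> V (m (iv x) y).
Proof.
rewrite -psi_ker psiM psiV; split=> [->|h]; first by rewrite mulVg.
by apply: (@mulgI _ (psi x)^-1%g); rewrite h mulVg.
Qed.

Lemma psi_pow w k : psi (gpow L w k) = ((psi w) ^+ k)%g.
Proof. by elim: k => [|k IH] /=; rewrite ?psi1 // psiM IH expgS. Qed.

Definition img (S : set T) : {set {perm 'I_n}} :=
  [set q | `[< exists2 x, S x & psi x = q >]].

Lemma mem_img S q : (q \in img S) <-> exists2 x, S x & psi x = q.
Proof. by rewrite inE; split => /asboolP. Qed.

Lemma img_psi S x : S x -> psi x \in img S.
Proof. by move=> Sx; apply/mem_img; exists x. Qed.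

Lemma img_group_set S : is_subgroup L S -> group_set (img S).
Proof.
move=> sS; apply/group_setP; split; first by rewrite -psi1; apply: img_psi; apply: subg1.
move=> a b /mem_img [x Sx <-] /mem_img [y Sy <-].
by rewrite -psiM; apply: img_psi; apply: subgM.
Qed.

Lemma card_img_setT : #|img setT| = n.
Proof.
have -> : img setT = [set psi (r i) | i : 'I_n].
  apply/setP => q; apply/idP/idP.
    move=> /mem_img [x _ <-]; apply/imsetP; exists (idx x) => //.
    by apply/psi_eq; apply: (subgVl nV.1); rewrite invgM invgK; apply: idxP.
  by move=> /imsetP [i _ ->]; apply: img_psi.
rewrite card_imset ?card_ord // => i j /psi_eq h.
by apply/val_inj/hd => //; apply: ltn_ord.
Qed.

End FinQuot.

Section Frat.
Local Open Scope group_scope.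
Lemma frattini_step (gT : finGroupType) (p : nat) (P K : {group gT}) :
  pgroup p P -> K \subset P ->
  exists M : {group gT}, [/\ K \subset M, M \subset P, P \subset 'N(M),
    (forall a, a \in P -> a ^+ p \in M) & (P \subset M -> P \subset K)].
Proof.
move=> pP KP.
have PhiM : 'Phi(P) \subset (K <*> 'Phi(P))%G by apply: joing_subr.
have MP : (K <*> 'Phi(P))%G \subset P by rewrite join_subG KP Phi_sub.
exists (K <*> 'Phi(P))%G; split.
- exact: joing_subl.
- exact: MP.
- apply: normal_norm; apply: sub_der1_normal => //.
  apply: (mathcomp.boot.fintype.subset_trans _ PhiM); rewrite (Phi_joing pP); exact: joing_subl.
- move=> a aP; apply: (mathcomp.boot.fintype.subsetP PhiM); rewrite (Phi_joing pP).
  apply: (mathcomp.boot.fintype.subsetP (joing_subr _ _)).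
  have := Mho_p_elt 1 aP (mem_p_elt pP aP); by rewrite expn1.
- move=> PM; have eM : (K <*> 'Phi(P))%g = P by apply/eqP; rewrite mathcomp.boot.finset.eqEsubset MP PM.
  have := Phi_nongen (G := P) (X := K); rewrite joingC eM genGid => /(_ erefl) ->.
  exact: subxx.
Qed.
End Frat.

Section Core.
Context {T : topologicalType} (L : group_law T).
Local Notation m := (gmul L).
Local Notation iv := (ginv L).
Local Notation e := (gone L).
Hypothesis tg : is_topological_group L.
Hypothesis cT : compact [set: T].
Hypothesis hT : hausdorff_space T.
Hypothesis tdT : totally_disconnected [set: T].
Variable p : nat.
Hypothesis pr : prime p.
Hypothesis hpro : forall U, open U -> is_normal_subgroup L U ->
  exists k, has_index L U (p ^ k).

Lemma setT_subgroup : is_subgroup L setT.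
Proof. by []. Qed.

Lemma gen_core (U : set T) (h : T) (u c : seq T) :
  open U -> is_normal_subgroup L U ->
  {subset u <= U} -> {subset c <= U} ->
  (forall x, U x -> exists2 y, closure (gen_subgroup L [set z | z \in u]) y &
       closed_normal_closure L [set h] (m (iv y) x)) ->
  (forall z, (exists y cc, [/\ cc \in c, U y & m (iv z) (m h z) = m y (m cc (iv y))]) \/
             (exists w, U w /\ m (iv z) (m h z) = gpow L w p)) ->
  U `<=` closure (gen_subgroup L [set z | z \in u ++ c]).
Proof.
move=> oU nU uU cU hu hc x Ux.
set H := gen_subgroup L [set z | z \in u ++ c].
have sH : is_subgroup L H := gen_sub _ _.
have HU : H `<=` U.
  apply: gen_min nU.1 _ => z /=; rewrite mem_cat => /orP [/uU|/cU]; by rewrite inE.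
apply: (closure_char tg cT hT tdT sH) => V oV nV.
have [k [s [_ [hd hcov]]]] := hpro oV nV.
pose ps := psi nV hd hcov.
pose PU := @mathcomp.fingroup.fingroup.group _ _ (img_group_set nV hd hcov nU.1).
pose KH := @mathcomp.fingroup.fingroup.group _ _ (img_group_set nV hd hcov sH).
pose GT := @mathcomp.fingroup.fingroup.group _ _ (img_group_set nV hd hcov setT_subgroup).
have pGT : pgroup p GT.
  by rewrite /pgroup /= card_img_setT pnatX pnat_id.
have PG : PU \subset GT.
  apply/mathcomp.boot.fintype.subsetP => q /mem_img [y _ <-]; exact: img_psi.
have pP : pgroup p PU := pgroupS PG pGT.
have KP : KH \subset PU.
  apply/mathcomp.boot.fintype.subsetP => q /mem_img [y Hy <-]; exact: img_psi (HU _ Hy).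
have [M [KM MP PnM pw PMK]] := frattini_step pP KP.
pose Mt := [set y | U y /\ ps y \in M].
have sMt : is_subgroup L Mt.
  split; first by split; [apply: subg1 nU.1|rewrite /ps psi1 group1].
  split; first by move=> a b [Ua Ma] [Ub Mb]; split; [apply: subgM nU.1 Ua Ub|rewrite /ps psiM groupM].
  by move=> a [Ua Ma]; split; [apply: subgV nU.1 Ua|rewrite /ps psiV groupV].
have nMt : nbhs e Mt.
  have : nbhs e (V `&` U).
    by apply: filterI; apply: open_nbhs_nbhs; split => //; [apply: subg1 nV.1|apply: subg1 nU.1].
  apply: filterS => y [Vy Uy]; split => //.
  by rewrite /ps (proj2 (psi_ker nV hd hcov y) Vy) group1.
have oMt := subgroup_open tg sMt nMt.
have clMt := open_subgroup_closed tg sMt oMt.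
have KMt : forall y, H y -> Mt y.
  by move=> y Hy; split; [exact: HU|apply: (mathcomp.boot.fintype.subsetP KM); exact: img_psi].
have uMt : closure (gen_subgroup L [set z | z \in u]) `<=` Mt.
  rewrite [X in _ `<=` X]((closure_id Mt).1 clMt); apply: closureS.
  apply: gen_min sMt _ => z zu; apply: KMt; apply: gen_incl => /=.
  by rewrite mem_cat zu.
pose M' := [set y | forall z, Mt (m (iv z) (m y z))].
have clM' : closed M'.
  have -> : M' = \bigcap_(z in [set: T]) ((fun y => m (iv z) (m y z)) @^-1` Mt).
    by apply/seteqP; split => [y hy z _|y hy z]; [exact: hy|exact: hy z I].
  apply: closed_bigI => z _.
  exact: (proj1 (continuous_closedP _) (@cont_conj _ _ tg z) _ clMt).
have nM' : is_normal_subgroup L M'.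
  split; first split.
  - by move=> z; rewrite g1mul gVmul; apply: subg1 sMt.
  - split; first by move=> a b ha hb z; rewrite conjM; apply: subgM sMt (ha z) (hb z).
    move=> a ha z; have := subgV sMt (ha z).
    by rewrite !invgM invgK gmulA.
  - move=> a b hb z.
    have -> : m (iv z) (m (m (m (iv a) b) a) z) = m (iv (m a z)) (m b (m a z)).
      by rewrite invgM -!gmulA.
    exact: hb.
have hM' : M' h.
  move=> z; case: (hc z) => [[y [cc [ccc Uy ->]]]|[w [Uw ->]]].
    have Ucc : U cc by move: (cU _ ccc); rewrite inE.
    split; first by apply: subgM nU.1 Uy (subgM nU.1 Ucc (subgV nU.1 Uy)).
    rewrite /ps !psiM psiV.
    have Mcc : psi nV hd hcov cc \in M.
      apply: (mathcomp.boot.fintype.subsetP KM); apply: img_psi.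
      by apply: gen_incl => /=; rewrite mem_cat ccc orbT.
    have Py : psi nV hd hcov y \in PU by apply: img_psi.
    have : ((psi nV hd hcov cc) ^ ((psi nV hd hcov y)^-1))%g \in M.
      by rewrite memJ_norm // groupV (mathcomp.boot.fintype.subsetP PnM).
    by rewrite /conjg mathcomp.fingroup.fingroup.invgK.
  split; first by apply: gpow_sub nU.1 Uw.
  by rewrite /ps psi_pow; apply: pw; apply: img_psi.
have NMt : closed_normal_closure L [set h] `<=` Mt.
  move=> y Ny.
  have My : M' y by apply: Ny; split => //; split => // a ->.
  by have := My e; rewrite invg1 g1mul gmul1.
have UMt : U `<=` Mt.
  move=> a Ua; have [y cy Ny] := hu a Ua.
  by rewrite -(mulKVg L y a); apply: subgM sMt (uMt _ cy) (NMt _ Ny).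
have PM : PU \subset M.
  apply/mathcomp.boot.fintype.subsetP => q /mem_img [y Uy <-]; exact: (UMt _ Uy).2.
have /mem_img [y Hy ey] := mathcomp.boot.fintype.subsetP (PMK PM) _ (img_psi nV hd hcov Ux).
by exists y => //; apply/(psi_eq nV hd hcov).
Qed.

End Core.

Section Numeric.
Context {T : topologicalType} (L : group_law T).
Local Notation m := (gmul L).
Local Notation iv := (ginv L).
Local Notation e := (gone L).

Lemma has_index_uniq U n n' : is_subgroup L U ->
  has_index L U n -> has_index L U n' -> (n <= n')%N.
Proof.
move=> sU [s [_ [hd hc]]] [s' [_ [hd' hc']]].
have ex : forall i : 'I_n, exists j : 'I_n', U (m (iv (nth e s' j)) (nth e s i)).
  by move=> i; have [j ltj Uj] := hc' (nth e s i); exists (Ordinal ltj).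
have [f hf] := choice ex.
have finj : injective f.
  move=> i j fij; apply/val_inj/hd; [exact: ltn_ord|exact: ltn_ord|].
  have h1 := hf i; have h2 := hf j; rewrite fij in h1.
  have := subgM sU (subgV sU h1) h2.
  by rewrite invgM invgK -gmulA mulKVg.
by have := leq_card f finj; rewrite !card_ord.
Qed.

Lemma index_eq U n : is_subgroup L U -> has_index L U n -> Pilot.Defs.index L U = n%:R.
Proof.
move=> sU hn; rewrite /Pilot.Defs.index.
have -> : [set (k%:R : Rdefinitions.R) | k in [set k | has_index L U k]] = [set n%:R].
  apply/seteqP; split => [_ [k hk <-]|_ ->]; last by exists n.
  by have := has_index_uniq sU hn hk; have := has_index_uniq sU hk hn => h1 h2;
     rewrite /= (@anti_leq k n) ?h1 ?h2.
exact: inf1.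
Qed.

Lemma dgen_ge0 U : 0 <= dgen L U.
Proof.
rewrite /dgen; set E := [set _ | _ in _].
have [[x Ex]|E0] := pselect (E !=set0).
  by apply: lb_le_inf; [exists x|move=> _ [k _ <-]; apply: ler0n].
have -> : E = set0 by apply/seteqP; split => // x Ex; apply: E0; exists x.
by rewrite inf0.
Qed.

Lemma dgen_le U s : top_generated_by L U s -> dgen L U <= (size s)%:R.
Proof.
move=> hs; apply: ge_inf; last by exists (size s) => //; exists s.
by exists 0 => _ [k _ <-]; apply: ler0n.
Qed.

Lemma dgen_empty U : ~ (exists s, top_generated_by L U s) -> dgen L U = 0.
Proof.
move=> ns; rewrite /dgen.
have -> : [set (k%:R : Rdefinitions.R) | k in [set k : nat | exists s : seq T,
        size s = k /\ top_generated_by L U s]] = set0.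
  by apply/seteqP; split => // x [k [s [sk hs]] kx]; apply: ns; exists s.
by rewrite inf0.
Qed.

Lemma dgen_lb U (t : Rdefinitions.R) : (exists s, top_generated_by L U s) ->
  (forall s, top_generated_by L U s -> t <= (size s)%:R) -> t <= dgen L U.
Proof.
move=> [s hs] ht; apply: lb_le_inf.
  by exists (size s)%:R; exists (size s) => //; exists s.
move=> _ [k [s' [sk hs']] <-]; rewrite -sk; exact: ht.
Qed.

Lemma index_ge0 U : 0 <= Pilot.Defs.index L U.
Proof.
rewrite /Pilot.Defs.index; set E := [set _ | _ in _].
have [[x Ex]|E0] := pselect (E !=set0).
  by apply: lb_le_inf; [exists x|move=> _ [k _ <-]; apply: ler0n].
have -> : E = set0 by apply/seteqP; split => // x Ex; apply: E0; exists x.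
by rewrite inf0.
Qed.

Lemma rg_le U : open U -> is_normal_subgroup L U ->
  rank_gradient L <= dgen L U / Pilot.Defs.index L U.
Proof.
move=> oU nU; apply: ge_inf; last by exists U.
exists 0 => _ [V _ <-]; apply: divr_ge0; [apply: dgen_ge0|apply: index_ge0].
Qed.

End Numeric.

Section ConjList.
Context {T : topologicalType} (L : group_law T).
Local Notation m := (gmul L).
Local Notation iv := (ginv L).
Local Notation e := (gone L).

Lemma conj_mul a b x : m (iv (m a b)) (m x (m a b)) = m (iv b) (m (m (iv a) (m x a)) b).
Proof. by rewrite invgM !gmulA. Qed.
Lemma conj_comm x y : m x y = m y x -> m (iv y) (m x y) = x.
Proof. by move=> h; rewrite h mulKg. Qed.

Variable p : nat.
Hypothesis pr : prime p.

Lemma conj_list (U : set T) (g : T) (k e0 : nat) :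
  is_normal_subgroup L U -> has_index L U (p ^ e0) -> U (gpow L g (p ^ k)) ->
  exists c : seq T, [/\ (size c * p ^ k <= p ^ e0)%N, {subset c <= U} &
   forall z, (exists y cc, [/\ cc \in c, U y &
        m (iv z) (m (gpow L g (p ^ k)) z) = m y (m cc (iv y))]) \/
     (exists w, U w /\ m (iv z) (m (gpow L g (p ^ k)) z) = gpow L w p)].
Proof.
move=> nU [s [_ [hd hc]]] Uh.
set h := gpow L g (p ^ k).
pose ps := psi nU hd hc.
pose GT := @mathcomp.fingroup.fingroup.group _ _ (img_group_set nU hd hc (setT_subgroup L)).
have cGT : #|GT| = (p ^ e0)%N by rewrite /= card_img_setT.
pose a := ps g.
have aG : a \in GT by apply: img_psi.
have p1 : (1 < p)%N := prime_gt1 pr.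
have psker : forall x, ps x = 1%g -> U x by move=> x /(psi_ker nU hd hc).
have pspow : forall x j, ps (gpow L x j) = (ps x ^+ j)%g by move=> x j; apply: psi_pow.
case: (pselect (exists j, [/\ (0 < j)%N, (j < p ^ k)%N & U (gpow L g j)])) => [[j [j0 jk Uj]]|nj].
  have ajn : (a ^+ j)%g = 1%g by rewrite -pspow; apply/(psi_ker nU hd hc).
  have ae : (a ^+ (p ^ e0))%g = 1%g by have := expg_cardG aG; rewrite cGT.
  have : (#[a]%g %| p ^ e0)%N by rewrite order_dvdn ae.
  case/(dvdn_pfactor _ _ pr) => i _ ai.
  have : (#[a]%g %| j)%N by rewrite order_dvdn ajn.
  move=> /(dvdn_leq j0); rewrite ai => pij.
  have ik : (i < k)%N by rewrite -(ltn_exp2l _ _ p1); apply: leq_ltn_trans pij jk.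
  case: k ik Uh jk @h => // k' ik Uh jk h.
  have Ug : U (gpow L g (p ^ k')).
    apply: psker; rewrite pspow; apply/eqP; rewrite -order_dvdn ai.
    by apply: dvdn_exp2l.
  exists [::]; split => //= z; right.
  exists (m (iv z) (m (gpow L g (p ^ k')) z)); split; first exact: normal_conj.
  by rewrite /h expnSr gpowM gpow_conj.
have ord : (p ^ k <= #[a]%g)%N.
  rewrite leqNgt; apply/negP => ltak; apply: nj; exists #[a]%g; split => //.
  by apply: psker; rewrite pspow expg_order.
pose A := <[a]>%G.
have AG : A \subset GT by rewrite cycle_subG.
have ex_lift : forall q : {perm 'I_(p ^ e0)}, exists x, q \in GT -> ps x = q.
  move=> q; case: (boolP (q \in GT)) => [/mem_img [x _ <-]|nq]; first by exists x.
  by exists e.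
have [lift hlift] := choice ex_lift.
pose cs := enum (rcosets A GT).
pose c := [seq m (iv (lift (fingroup.repr X))) (m h (lift (fingroup.repr X))) | X <- cs].
exists c; split.
- rewrite size_map -cardE.
  have LG := Lagrange AG; rewrite cGT in LG.
  apply: (@leq_trans (#|A| * #|GT : A|%g)%N); last by rewrite LG.
  by rewrite mulnC; apply: leq_mul.
- move=> z /mapP [X _ ->]; rewrite inE; exact: normal_conj.
move=> z; left.
set q := ps z.
have qG : q \in GT by apply: img_psi.
set X := (A :* q)%g.
have XR : X \in rcosets A GT by rewrite mem_rcosets mulSGid.
have rX : fingroup.repr X \in X by apply: mem_repr_rcoset.
have rG : fingroup.repr X \in GT.
  by case/rcosetP: rX => b bA ->; rewrite groupM // (mathcomp.boot.fintype.subsetP AG).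
set r := lift (fingroup.repr X).
have pr' : ps r = fingroup.repr X by apply: hlift.
have qX : q \in (A :* fingroup.repr X)%g.
  by rewrite (rcoset_eqP rX) rcoset_refl.
case/rcosetP: qX => b /cycleP [j ->] qe.
pose w := m (gpow L g j) r.
have Uv : U (m (iv w) z).
  apply/(psi_eq nU hd hc); rewrite /w psiM psi_pow.
  by rewrite -/ps pr' -qe.
set v := m (iv w) z.
have zE : z = m w v by rewrite /v mulKVg.
exists (iv v), (m (iv r) (m h r)); split.
- by apply/mapP; exists X => //; rewrite mem_enum.
- exact: subgV nU.1 Uv.
rewrite invgK {1 2}zE conj_mul /w conj_mul.
by rewrite (@conj_comm h (gpow L g j)) // /h gpow_comm.
Qed.

End ConjList.

Lemma closure_image {A B : topologicalType} (f : A -> B) (S : set A) x :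
  continuous f -> closure S x -> closure (f @` S) (f x).
Proof.
move=> cf clS W nW.
have nW' : nbhs x (f @^-1` W) := cf x W nW.
have [a [Sa Wa]] := clS _ nW'.
by exists (f a); split => //; exists a.
Qed.

Section QuotSide.
Context {G Q : topologicalType} (LG : group_law G) (LQ : group_law Q).
Variable pi : G -> Q.
Hypothesis Hhom : is_group_hom LG LQ pi.
Hypothesis Hcont : continuous pi.
Hypothesis Hsurj : forall q : Q, exists x : G, pi x = q.
Hypothesis tgQ : is_topological_group LQ.
Hypothesis cG : compact [set: G].
Hypothesis hQ : hausdorff_space Q.

Lemma index_transfer (Ub : set Q) n :
  has_index LG (pi @^-1` Ub) n -> has_index LQ Ub n.
Proof.
move=> [s [sz [hd hc]]]; exists (map pi s); split; first by rewrite size_map.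
split.
  move=> i j ilt jlt; rewrite !(nth_map (gone LG)) ?sz // -(homV Hhom) -Hhom.
  exact: hd.
move=> q; have [x <-] := Hsurj q; have [i ilt hi] := hc x.
by exists i => //; rewrite (nth_map (gone LG)) ?sz // -(homV Hhom) -Hhom.
Qed.

Lemma gen_transfer (Ub : set Q) s : is_subgroup LQ Ub -> open Ub ->
  top_generated_by LG (pi @^-1` Ub) s -> top_generated_by LQ Ub (map pi s).
Proof.
move=> sUb oUb [sU clU]; split.
  move=> q /mapP [x xs ->]; have := sU x xs; rewrite !inE; exact.
have clUb := open_subgroup_closed tgQ sUb oUb.
apply/seteqP; split.
  rewrite [X in _ `<=` X]((closure_id Ub).1 clUb); apply: closureS.
  apply: (gen_min sUb) => q /= /mapP [x xs ->]; have := sU x xs; rewrite !inE; exact.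
move=> q Ubq; have [x xq] := Hsurj q.
have Ux : (pi @^-1` Ub) x by rewrite /= xq.
rewrite -clU in Ux.
have sub : pi @` gen_subgroup LG [set z | z \in s] `<=` gen_subgroup LQ [set z | z \in map pi s].
  have h1 := @gen_image _ _ _ _ _ Hhom [set z | z \in s].
  have h2 : gen_subgroup LQ (pi @` [set z | z \in s]) `<=` gen_subgroup LQ [set z | z \in map pi s].
    apply: (gen_min (gen_sub LQ _)) => _ [y ys <-].
    by apply: gen_incl => /=; apply/mapP; exists y.
  exact: (subset_trans h1 h2).
have := closure_image Hcont Ux; rewrite xq.
exact: (closureS sub).
Qed.

Lemma lift_gen (Ub : set Q) (N : set G) sb :
  [set x | pi x = gone LQ] = N ->
  top_generated_by LQ Ub sb ->
  exists u : seq G, [/\ size u = size sb, {subset u <= pi @^-1` Ub} &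
    forall x, (pi @^-1` Ub) x -> exists2 y, closure (gen_subgroup LG [set z | z \in u]) y &
       N (gmul LG (ginv LG y) x)].
Proof.
move=> Hker [sbU clsb].
have [f hf] := choice Hsurj.
exists (map f sb); split; first by rewrite size_map.
  move=> x /mapP [q qs ->]; rewrite inE /= hf; have := sbU q qs; rewrite inE; exact.
move=> x Ux.
set K := closure (gen_subgroup LG [set z | z \in map f sb]).
have clK : closed K by apply: closed_closure.
have cK : compact K by apply: (subclosed_compact clK cG).
have cpiK : compact (pi @` K).
  by apply: continuous_compact => //; apply: continuous_subspaceT.
have clpiK : closed (pi @` K) by apply: compact_closed.
have UbK : Ub `<=` pi @` K.
  have s1 : gen_subgroup LQ [set z | z \in sb] `<=` pi @` gen_subgroup LG [set z | z \in map f sb].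
    apply: (gen_min (image_subgroup Hhom (gen_sub LG _))) => q /= qs.
    exists (f q); last exact: hf.
    by apply: gen_incl => /=; apply/mapP; exists q.
  have s2 : pi @` gen_subgroup LG [set z | z \in map f sb] `<=` pi @` K.
    by move=> _ [y hy <-]; exists y => //; apply: subset_closure.
  rewrite -clsb [X in _ `<=` X]((closure_id _).1 clpiK); apply: closureS.
  exact: (subset_trans s1 s2).
have [y Ky ey] := UbK _ Ux.
by exists y => //; rewrite -Hker /= Hhom (homV Hhom) ey gVmul.
Qed.

End QuotSide.

Theorem proposition2p1 (p : nat) (hp : prime p)
  (G : topologicalType) (LG : group_law G)
  (HG : pro_p_group LG p) (Hfg : top_finitely_generated LG)
  (g : G) (k : nat)
  (Q : topologicalType) (LQ : group_law Q)
  (HQtop : is_topological_group LQ) (HQhaus : hausdorff_space Q)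
  (pi : G -> Q) (Hhom : is_group_hom LG LQ pi) (Hcont : continuous pi)
  (Hsurj : forall q : Q, exists x : G, pi x = q)
  (Hker : [set x : G | pi x = gone LQ]
          = closed_normal_closure LG [set gpow LG g (p ^ k)%N]) :
  rank_gradient LQ >= rank_gradient LG - 1 / ((p ^ k)%N%:R).
Proof.
case: HG => tgG cG hG tdG hproG.
set N := closed_normal_closure LG [set gpow LG g (p ^ k)%N] in Hker *.
set h := gpow LG g (p ^ k)%N in N Hker *.
have Nh : N h by move=> H [_ [_ sub]]; apply: sub.
have pih : pi h = gone LQ by have : [set x | pi x = gone LQ] h by rewrite Hker.
have K0 : (0 : Rdefinitions.R) < (p ^ k)%N%:R by rewrite ltr0n expn_gt0 prime_gt0.
apply: lb_le_inf.
  exists (dgen LQ setT / Pilot.Defs.index LQ setT); exists setT => //; split; first exact: openT.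
  by split => //.
move=> _ [Ub [oUb nUb] <-].
set U := pi @^-1` Ub.
have oU : open U by apply: (proj1 (continuousP _) Hcont).
have nU : is_normal_subgroup LG U := preim_normal Hhom nUb.
have [e0 hie] := hproG U oU nU.
have ieU : Pilot.Defs.index LG U = (p ^ e0)%N%:R := index_eq nU.1 hie.
have ieUb : Pilot.Defs.index LQ Ub = (p ^ e0)%N%:R.
  exact: (index_eq nUb.1 (index_transfer Hhom Hsurj hie)).
have P0 : (0 : Rdefinitions.R) < (p ^ e0)%N%:R by rewrite ltr0n expn_gt0 prime_gt0.
have rgle := rg_le oU nU; rewrite ieU in rgle.
rewrite ieUb.
case: (pselect (exists s, top_generated_by LG U s)) => [[s hs]|ns]; last first.
  rewrite (dgen_empty ns) mul0r in rgle.
  apply: (le_trans (y := 0)); last by apply: divr_ge0; [apply: dgen_ge0|apply: ltW].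
  rewrite lerBlDr add0r; apply: (le_trans rgle).
  by apply: divr_ge0 => //; apply: ltW.
have NU : N `<=` U by move=> y Ny; rewrite /U /= -(Hker) in Ny *; rewrite /= Ny; apply: (subg1 nUb.1).
have Uh : U h by apply: NU.
have [c [hc1 hc2 hc3]] := conj_list hp nU hie Uh.
have key : forall sb, top_generated_by LQ Ub sb ->
    dgen LG U <= (size sb + size c)%N%:R.
  move=> sb hsb.
  have [u [su uU hu]] := lift_gen Hhom Hcont Hsurj cG HQhaus Hker hsb.
  have cl := gen_core tgG cG hG tdG hp hproG oU nU uU hc2 hu hc3.
  have clU := open_subgroup_closed tgG nU.1 oU.
  have tg : top_generated_by LG U (u ++ c).
    split.
      by move=> z; rewrite mem_cat => /orP [/uU|/hc2].
    apply/seteqP; split => //.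
    rewrite [X in _ `<=` X]((closure_id _).1 clU); apply: closureS.
    apply: (gen_min nU.1) => z /=; rewrite mem_cat => /orP [/uU|/hc2]; by rewrite inE.
  by have := dgen_le tg; rewrite size_cat su.
have lb : dgen LG U - (size c)%:R <= dgen LQ Ub.
  apply: dgen_lb; first by exists (map pi s); apply: (gen_transfer Hhom Hcont Hsurj HQtop nUb.1 oUb).
  by move=> sb hsb; rewrite lerBlDr -natrD; apply: key.
have cP : (size c)%:R / (p ^ e0)%N%:R <= 1 / (p ^ k)%N%:R :> Rdefinitions.R.
  rewrite ler_pdivrMr // mul1r mulrC ler_pdivlMr //.
  by rewrite -natrM ler_nat.
apply: (le_trans (y := (dgen LG U - (size c)%:R) / (p ^ e0)%N%:R)); last first.
  by rewrite ler_pM2r ?invr_gt0.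
by rewrite mulrBl; apply: lerB.
Qed.
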